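(* Let $\approx$ be an equinumerosity on $\mathbb{W}$ and let $A,B\in\mathbb W$ with $A\approx B$. Then for every proper superset $A'\in\mathbb W$ of $A$ there exists a proper superset $B'\in\mathbb W$ of $B$ such that $A'\approx B'$.
   Context: Let $\mathbb N=\{0,1,2,\dots\}$. Let $\mathbb{W}$ be the family of finitary point sets: sets $A\subseteq\bigcup_{k\ge1}\mathbb N^k$ of finite tuples of natural numbers (tuples of different lengths allowed) such that for every $n\in\mathbb N$ there is $h$ with $A\cap\{0,\dots,n\}^k=\emptyset$ for all $k>h$. Cartesian products are identified with concatenations: $A\times B=\{(a_1,\dots,a_k,b_1,\dots,b_h):(a_1,\dots,a_k)\in A,\ (b_1,\dots,b_h)\in B\}$; $\{n\}$ denotes the set whose only element is the 1-tuple $(n)$. $A,B\in\mathbb W$ are multipliable if distinct pairs $(a,b)\in A\times B$ have distinct concatenations. Given an equivalence relation $\approx$ on $\mathbb W$, write $A\succ B$, equivalently $B\prec A$, if there exist $A',B'\in\mathbb W$ with $B'\subsetneq A'$, $A\approx A'$ and $B\approx B'$. An equinumerosity is an equivalence relation $\approx$ on $\mathbb W$ such that for all $A,B\in\mathbb W$: (AP) $A\approx B$ iff $A\setminus B\approx B\setminus A$; (ZP) exactly one of $A\approx B$, $A\succ B$, $A\prec B$ holds; (TP) if $T$ is injective on $A$ and $T(a)$ is a permutation of the coordinates of $a$ for every $a\in A$, then $A\approx T[A]$; (UP) $A\times\{n\}\approx A$ for all $n\in\mathbb N$; (PP) if $A,B$ are multipliable, $A',B'$ are multipliable, $A\approx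 A'$ and $B\approx B'$, then $A\times B\approx A'\times B'$. *)

(* Defs.v *)
From mathcomp Require Import all_boot.
Set Implicit Arguments. Unset Strict Implicit. Unset Printing Implicit Defensive.

Definition pset := seq nat -> Prop.

Definition W (A : pset) : Prop :=
  (forall a, A a -> 0 < size a) /\
  forall n : nat, exists h : nat, forall a, A a -> h < size a ->
    ~ (all (fun x => x <= n) a).

Definition subset (A B : pset) : Prop := forall a, A a -> B a.
Definition psubset (B A : pset) : Prop := subset B A /\ exists a, A a /\ ~ B a.
Definition setminus (A B : pset) : pset := fun a => A a /\ ~ B a.

(* Cartesian product = concatenation *)
Definition pprod (A B : pset) : pset :=
  fun c => exists a b, A a /\ B b /\ c = a ++ b.
Definition psing (n : nat) : pset := fun c => c = [:: n].
Definition pimage (T : seq nat -> seq nat) (A : pset) : pset :=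
  fun c => exists a, A a /\ c = T a.

Definition multipliable (A B : pset) : Prop :=
  forall a1 b1 a2 b2, A a1 -> B b1 -> A a2 -> B b2 ->
    a1 ++ b1 = a2 ++ b2 -> a1 = a2 /\ b1 = b2.

Definition succ (R : pset -> pset -> Prop) (A B : pset) : Prop :=
  exists A' B', W A' /\ W B' /\ psubset B' A' /\ R A A' /\ R B B'.

Definition equinumerosity (R : pset -> pset -> Prop) : Prop :=
  (forall A, W A -> R A A) /\
  (forall A B, W A -> W B -> R A B -> R B A) /\
  (forall A B C, W A -> W B -> W C -> R A B -> R B C -> R A C) /\
  (* AP *)
  (forall A B, W A -> W B -> (R A B <-> R (setminus A B) (setminus B A))) /\
  (forall A B, W A -> W B ->
     (R A B /\ ~ succ R A B /\ ~ succ R B A) \/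
     (~ R A B /\ succ R A B /\ ~ succ R B A) \/
     (~ R A B /\ ~ succ R A B /\ succ R B A)) /\
  (forall A (T : seq nat -> seq nat), W A ->
     (forall a b, A a -> A b -> T a = T b -> a = b) ->
     (forall a, A a -> perm_eq (T a) a) ->
     R A (pimage T A)) /\
  (* UP *)
  (forall A (n : nat), W A -> R (pprod A (psing n)) A) /\
  (forall A B A' B', W A -> W B -> W A' -> W B' ->
     multipliable A B -> multipliable A' B' -> R A A' -> R B B' ->
     R (pprod A B) (pprod A' B')).

(* Main.v *)
Require Import Defs.
From mathcomp Require Import all_boot.
From mathcomp Require Import zify.
From Stdlib Require Import Classical FunctionalExtensionality PropExtensionality.
Set Implicit Arguments. Unset Strict Implicit.

Lemma pset_ext (A B : pset) : (forall a, A a <-> B a) -> A = B.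
Proof.
move=> H; apply: functional_extensionality => a.
apply: propositional_extensionality; exact: H.
Qed.

Lemma W_sub (A B : pset) : W B -> Defs.subset A B -> W A.
Proof.
move=> [H1 H2] S; split; first by move=> a /S /H1.
move=> n; have [h Hh] := H2 n; exists h => a /S; exact: Hh.
Qed.

Definition punion (A B : pset) : pset := fun a => A a \/ B a.

Lemma W_union A B : W A -> W B -> W (punion A B).
Proof.
move=> [A1 A2] [B1 B2]; split; first by move=> a [/A1|/B1].
move=> n; have [h1 H1] := A2 n; have [h2 H2] := B2 n.
exists (h1 + h2) => a [Ha|Ha] Hs.
- apply: H1 Ha _; lia.
- apply: H2 Ha _; lia.
Qed.

Definition tw (c : seq nat) i := c ++ 0 :: nseq i 1.

Lemma nseqS1 k : nseq k.+1 1 = nseq k 1 ++ [:: 1].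
Proof. elim: k => [//|k IH] /=. by rewrite -IH. Qed.

Lemma twS c k : tw c k.+1 = tw c k ++ [:: 1].
Proof. by rewrite /tw -catA /= -nseqS1. Qed.

Definition TU (C Z : pset) : pset := fun u =>
  exists c i, C c /\ u = tw c i /\ forall j, j < i -> Z (tw c j).

Lemma W_TU C Z : W C -> W Z -> W (TU C Z).
Proof.
move=> WC WZ; split.
- move=> u [c [i [_ [-> _]]]]; by rewrite /tw size_cat /= addnS.
- move=> n; have [h1 H1] := WC.2 n; have [h2 H2] := WZ.2 n.
  exists (h1 + h2).+1 => u [c [i [Cc [-> Hj]]]] Hs Hall.
  case: i Hs Hall Hj => [|k] Hs Hall Hj.
  + rewrite /tw all_cat in Hall; case/andP: Hall => Hc _.
    apply: (H1 c Cc _ Hc). move: Hs; rewrite /tw size_cat /=; lia.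
  + rewrite twS in Hs Hall.
    rewrite all_cat in Hall; case/andP: Hall => Hw _.
    apply: (H2 _ (Hj k (ltnSn k)) _ Hw). move: Hs; rewrite size_cat /=; lia.
Qed.

Lemma ex_min (P : nat -> Prop) i : P i -> exists i, P i /\ forall j, j < i -> ~ P j.
Proof.
suff: forall n i, i <= n -> P i -> exists i, P i /\ forall j, j < i -> ~ P j.
  by move=> H Pi; apply: (H i i).
elim=> [|n IH] k Hk Pk.
- exists k; split => // j; lia.
- case: (classic (exists j, j < k /\ P j)) => [[j [Hj Pj]]|H].
  + apply: (IH j) => //; lia.
  + exists k; split => // j Hj Pj; apply: H; by exists j.
Qed.

Lemma bound_seq (s : seq nat) : exists n, all (fun x => x <= n) s.
Proof.
elim: s => [|x s [n Hn]]; first by exists 0.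
exists (maxn x n) => /=; apply/andP; split; first by rewrite leq_maxl.
apply: sub_all Hn => y /= Hy; apply: (leq_trans Hy); by rewrite leq_maxr.
Qed.

Lemma fresh_copy R : equinumerosity R -> forall C Z, W C -> W Z -> (exists c, C c) ->
  exists D, W D /\ R D C /\ (forall a, D a -> ~ Z a) /\ exists d, D d.
Proof.
move=> [Rrefl [Rsym [Rtr [AP [ZP [TP [UP PP]]]]]]] C Z WC WZ [c0 Cc0].
pose U := TU C Z.
pose D : pset := fun u => U u /\ ~ Z u.
pose V' : pset := fun u => U u /\ Z u.
pose C' := pprod C (psing 0).
pose V := pprod V' (psing 1).
have WU : W U := W_TU WC WZ.
have C'U : Defs.subset C' U.
  move=> u [a [b [Ca [-> ->]]]]; exists a, 0; split => //; split => //.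
have VE : forall u, V u <-> U u /\ ~ C' u.
  move=> u; split.
  - move=> [w [b [[[c [i [Cc [-> Hj]]]] Zw] [-> ->]]]]; split.
    + exists c, i.+1; split => //; split; first by rewrite twS.
      move=> j; rewrite ltnS leq_eqVlt => /orP [/eqP -> //|]; exact: Hj.
    + move=> [a [b' [_ [-> Eu]]]]; move/(congr1 (@last nat 0)): Eu; by rewrite !cats1 !last_rcons.
  - move=> [[c [i [Cc [-> Hj]]]] nC]; case: i Hj nC => [|k] Hj nC.
    + exfalso; apply: nC; exists c, [:: 0]; by split.
    + exists (tw c k), [:: 1]; split; last by rewrite twS.
      split; last by apply: Hj.
      by exists c, k; split => //; split => // j Hjk; apply: Hj; lia.
have WV : W V by apply: (W_sub WU) => u /VE [].
have WV' : W V' by apply: (W_sub WU) => u [].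
have WD : W D by apply: (W_sub WU) => u [].
have WC' : W C' by apply: (W_sub WU).
exists D; split => //; split; last split.
- have := (AP V V' WV WV').1 (UP V' 1 WV').
  have -> : setminus V V' = setminus D C'.
    apply: pset_ext => a; split.
    + move=> [/VE [Ua nCa] nV]; split => //; split => // Za; by apply: nV.
    + move=> [[Ua nZa] nCa]; split; first by apply/VE.
      by move=> [].
  have -> : setminus V' V = setminus C' D.
    apply: pset_ext => a; split.
    + move=> [[Ua Za] nV]; split; last by move=> [].
      apply: NNPP => nCa; apply: nV; exact/VE.
    + move=> [Ca nD]; have Ua := C'U a Ca; split.
      * split => //; apply: NNPP => nZ; by apply: nD.
      * by move/VE => [].
  move/(AP D C' WD WC').2 => RDC'.
  apply: (Rtr _ C') => //; exact: UP.
- by move=> a [].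
- have [n Hn] := bound_seq c0.
  have [h Hh] := WZ.2 (maxn n 1).
  have Ph : ~ Z (tw c0 h).
    move=> Zt; apply: (Hh _ Zt).
    + rewrite /tw size_cat /= size_nseq; lia.
    + rewrite /tw all_cat; apply/andP; split.
      * apply: sub_all Hn => y /= Hy; apply: (leq_trans Hy); by rewrite leq_maxl.
      * rewrite /= all_nseq; apply/orP; right; by rewrite leq_maxr.
  have [i [Pi Hi]] := @ex_min (fun i => ~ Z (tw c0 i)) h Ph.
  exists (tw c0 i); split => //; exists c0, i; split => //; split => // j Hj.
  by apply: NNPP; apply: Hi.
Qed.

Theorem lemma1p5 (R : pset -> pset -> Prop) :
  equinumerosity R ->
  forall A B : pset, W A -> W B -> R A B ->
  forall A' : pset, W A' -> psubset A A' ->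
  exists B' : pset, W B' /\ psubset B B' /\ R A' B'.
Proof.
move=> HR A B WA WB RAB A' WA' [SAA' [x [A'x nAx]]].
have HR' := HR.
move: HR' => [Rrefl [Rsym [Rtr [AP [ZP [TP [UP PP]]]]]]].
pose C := setminus A' A.
have WC : W C by apply: (W_sub WA') => a [].
have WZ : W (punion A' B) := W_union WA' WB.
have [D [WD [RDC [DZ [d Dd]]]]] := fresh_copy HR WC WZ (ex_intro _ x (conj A'x nAx)).
exists (punion B D); split; first exact: W_union.
split.
  split; first by move=> a Ba; left.
  exists d; split; first by right.
  move=> Bd; apply: (DZ d Dd); by right.
have WAD : W (punion A D) := W_union WA WD.
have WBD := W_union WB WD.
apply: (Rtr _ (punion A D)) => //.
- apply/(AP _ _ WA' WAD).
  have -> : setminus A' (punion A D) = C.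
    apply: pset_ext => a; split.
    + move=> [A'a nAD]; split => // Aa; apply: nAD; by left.
    + move=> [A'a nAa]; split => //; move=> [//|Da]; apply: (DZ a Da); by left.
  have -> : setminus (punion A D) A' = D.
    apply: pset_ext => a; split.
    + move=> [[Aa|Da] nA'a] //; exfalso; exact: nA'a (SAA' a Aa).
    + move=> Da; split; first by right.
      move=> A'a; apply: (DZ a Da); by left.
  exact: Rsym.
- apply/(AP _ _ WAD WBD).
  have -> : setminus (punion A D) (punion B D) = setminus A B.
    apply: pset_ext => a; split.
    + move=> [[Aa|Da] nBD]; last by exfalso; apply: nBD; right.
      split => // Ba; apply: nBD; by left.
    + move=> [Aa nBa]; split; first by left.
      move=> [//|Da]; apply: (DZ a Da); left; exact: SAA'.
  have -> : setminus (punion B D) (punion A D) = setminus B A.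
    apply: pset_ext => a; split.
    + move=> [[Ba|Da] nAD]; last by exfalso; apply: nAD; right.
      split => // Aa; apply: nAD; by left.
    + move=> [Ba nAa]; split; first by left.
      move=> [//|Da]; apply: (DZ a Da); by right.
  exact/(AP _ _ WA WB).
Qed.
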